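(* For all integers $s,t\ge 1$, the complete tripartite graph $K_{1,s,t}$ has property $M(3)$. Consequently, if $\max\{s,t\}\ge 2$, then $m(K_{1,s,t})=3$.
   Context: All graphs are finite, simple and undirected. A list assignment $L$ for a graph $G$ assigns to each vertex $v$ a set $L(v)$ of colors; an $L$-coloring is a proper vertex coloring $c$ of $G$ with $c(v)\in L(v)$ for every vertex $v$. A $k$-list assignment is a list assignment with $|L(v)|=k$ for all $v$. $G$ is uniquely $k$-list colorable (U$k$LC) if there exists a $k$-list assignment $L$ such that $G$ has exactly one $L$-coloring. $G$ has property $M(k)$ if it is not U$k$LC, i.e. for every $k$-list assignment $L$, $G$ has either no $L$-coloring or at least two $L$-colorings. The m-number $m(G)$ is the least integer $k\ge 1$ such that $G$ has property $M(k)$. $K_{n_1,\dots,n_r}$ denotes the complete $r$-partite graph with parts of sizes $n_1,\dots,n_r$. *)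

(* Defs.v *)
(* Simple graphs are symmetric irreflexive relations on a finType. *)
From mathcomp Require Import all_boot.
Set Implicit Arguments. Unset Strict Implicit. Unset Printing Implicit Defensive.

(* Colors are natural numbers (any finite set of colors can be relabeled into nat). *)

Definition L_coloring (T : finType) (e : rel T) (L : T -> seq nat) (c : T -> nat) : Prop :=
  (forall v, c v \in L v) /\ (forall u v, e u v -> c u <> c v).

Definition k_list_assignment (T : finType) (k : nat) (L : T -> seq nat) : Prop :=
  forall v, uniq (L v) /\ size (L v) = k.

Definition unique_L_coloring (T : finType) (e : rel T) (L : T -> seq nat) : Prop :=
  exists c, L_coloring e L c /\
    forall c', L_coloring e L c' -> forall v, c' v = c v.

Definition UkLC (T : finType) (e : rel T) (k : nat) : Prop :=
  exists L : T -> seq nat, k_list_assignment k L /\ unique_L_coloring e L.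

Definition has_M (T : finType) (e : rel T) (k : nat) : Prop := ~ UkLC e k.

Definition m_number_is (T : finType) (e : rel T) (k : nat) : Prop :=
  [/\ 1 <= k, has_M e k & forall j, 1 <= j < k -> ~ has_M e j].

Definition K1st_V (s t : nat) : finType := (unit + ('I_s + 'I_t))%type.

Definition K1st_part {s t : nat} (x : K1st_V s t) : nat :=
  match x with
  | inl _ => 0
  | inr (inl _) => 1
  | inr (inr _) => 2
  end.

Definition K1st (s t : nat) : rel (K1st_V s t) :=
  fun x y => K1st_part x != K1st_part y.
Arguments K1st s t : clear implicits.

(* Main.v *)
Require Import Defs.
From mathcomp Require Import all_boot.
From mathcomp Require Import zify.
Set Implicit Arguments. Unset Strict Implicit. Unset Printing Implicit Defensive.

Definition pk (l : seq nat) a b := head 0 [seq z <- l | (z != a) && (z != b)].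

Lemma pkP l a b : uniq l -> size l = 3 -> [/\ pk l a b \in l, pk l a b != a & pk l a b != b].
Proof.
move=> Hu Hs; rewrite /pk.
case E: [seq z <- l | (z != a) && (z != b)] => [|z s'].
  have: size l <= size [:: a; b].
    apply: uniq_leq_size => // z Hz.
    have: z \notin [seq z <- l | (z != a) && (z != b)] by rewrite E.
    rewrite mem_filter Hz andbT negb_and !negbK !inE.
    by case/orP => ->; rewrite ?orbT.
  by rewrite Hs.
have : z \in [seq z <- l | (z != a) && (z != b)] by rewrite E mem_head.
by rewrite mem_filter => /andP [/andP [H1 H2] H3]; split.
Qed.

Lemma nbr (T : finType) (e : rel T) L c :
  (forall x y, e x y = e y x) -> L_coloring e L c ->
  (forall c', L_coloring e L c' -> forall v, c' v = c v) ->
  forall v z, z \in L v -> z != c v -> exists u, e v u /\ c u = z.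
Proof.
move=> Hsym Hc Hu v z Hz Hne.
case: (boolP [exists u, e v u && (c u == z)]).
  by move/existsP => [u /andP [H1 /eqP H2]]; exists u.
move/existsPn => H; exfalso.
pose c' := fun y => if y == v then z else c y.
have Hc' : L_coloring e L c'.
  split.
    by move=> y; rewrite /c'; case: eqP => [->|_] //; exact: Hc.1.
  move=> y1 y2 He; rewrite /c'.
  case: eqP => [E1|N1]; case: eqP => [E2|N2].
  - by subst; exfalso; exact: (Hc.2 _ _ He erefl).
  - subst y1 => Ez; have := H y2; by rewrite He Ez eqxx.
  - subst y2 => Ez; have := H y1; by rewrite -Hsym He -Ez eqxx.
  - exact: Hc.2.
have := Hu c' Hc' v; rewrite /c' eqxx => E.
by rewrite E eqxx in Hne.
Qed.

Lemma part_le2 s t (v : K1st_V s t) : K1st_part v <= 2.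
Proof. by case: v => [[]|[i|i]]. Qed.

Lemma part0 s t (w : K1st_V s t) : K1st_part w = 0 -> w = inl tt.
Proof. by case: w => [[]|[i|i]]. Qed.

Lemma M3 s t : has_M (K1st s t) 3.
Proof.
rewrite /has_M /UkLC => -[L [HL [c [Hc Hu]]]].
have Hsym : forall x y, K1st s t x y = K1st s t y x.
  by move=> x y; rewrite /K1st eq_sym.
have Hn := nbr Hsym Hc Hu.
pose a := (inl tt : K1st_V s t).
pose al := c a.
have [Hx Hxa _] := pkP al al (HL a).1 (HL a).2.
set x := pk (L a) al al in Hx Hxa.
have [u [Hau Hcu]] := Hn a x Hx Hxa.
pose p := K1st_part u.
have Hp0 : p <> 0 by move: Hau; rewrite /K1st /p /= eq_sym => /eqP.
have Hp2 : p <= 2 by apply: part_le2.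
pose c' := fun v => if K1st_part v == 0 then x
  else if K1st_part v == p then pk (L v) (c v) al else pk (L v) (c v) x.
have W : forall v, exists w, c' v = c w /\ (K1st_part v = 0 -> K1st_part w = p) /\
   (K1st_part v = p -> K1st_part w <> p /\ K1st_part w <> 0) /\
   (K1st_part v <> 0 -> K1st_part w <> K1st_part v).
  move=> v; rewrite /c'.
  case: eqP => [H0|H0].
    exists u; split; first by [].
    split; first by [].
    by split; move=> H; lia.
  case: eqP => [Hp|Hp].
    have [Hm Hne Hna] := pkP (c v) al (HL v).1 (HL v).2.
    have [w [Hvw Hcw]] := Hn v _ Hm Hne.
    exists w; split; first by [].
    have Hw : K1st_part w <> K1st_part v by move: Hvw; rewrite /K1st eq_sym => /eqP.
    have Hw0 : K1st_part w <> 0.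
      move=> /part0 Ew; subst w; by move: Hna; rewrite -Hcw /al /a eqxx.
    split; first by [].
    by split => // _; split => //; rewrite -Hp.
  have [Hm Hne Hna] := pkP (c v) x (HL v).1 (HL v).2.
  have [w [Hvw Hcw]] := Hn v _ Hm Hne.
  exists w; split; first by [].
  have Hw : K1st_part w <> K1st_part v by move: Hvw; rewrite /K1st eq_sym => /eqP.
  by split => // H; lia.
have Hc' : L_coloring (K1st s t) L c'.
  split.
    move=> v; rewrite /c'.
    case: eqP => [H0|H0].
      by rewrite (part0 H0).
    case: eqP => _.
      by have [] := pkP (c v) al (HL v).1 (HL v).2.
    by have [] := pkP (c v) x (HL v).1 (HL v).2.
  move=> y1 y2; rewrite /K1st => /eqP Hne.
  have B1 := part_le2 y1; have B2 := part_le2 y2.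
  have Hxq : forall y, K1st_part y <> 0 -> K1st_part y <> p -> c' y != x.
    move=> y Y0 Yp; rewrite /c'.
    rewrite ifN_eq; last exact/eqP. rewrite ifN_eq; last exact/eqP.
    by have [] := pkP (c y) x (HL y).1 (HL y).2.
  have Hx0 : forall y, K1st_part y = 0 -> c' y = x.
    by move=> y Y0; rewrite /c' Y0.
  case: (eqVneq (K1st_part y1) 0) => [Y10|Y10].
    case: (eqVneq (K1st_part y2) p) => [Y2p|Y2p].
      have [w1 [E1 [A1 _]]] := W y1; have [w2 [E2 [_ [A2 _]]]] := W y2.
      rewrite E1 E2; apply: Hc.2; rewrite /K1st.
      have := A1 Y10; have := A2 Y2p; move=> [? ?] ?; apply/eqP; lia.
    rewrite (Hx0 _ Y10) => Ex.
    have H := Hxq y2 ltac:(lia) (elimN eqP Y2p). by rewrite -Ex eqxx in H.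
  case: (eqVneq (K1st_part y2) 0) => [Y20|Y20].
    case: (eqVneq (K1st_part y1) p) => [Y1p|Y1p].
      have [w1 [E1 [_ [A1 _]]]] := W y1; have [w2 [E2 [A2 _]]] := W y2.
      rewrite E1 E2; apply: Hc.2; rewrite /K1st.
      have := A2 Y20; have := A1 Y1p; move=> [? ?] ?; apply/eqP; lia.
    rewrite (Hx0 _ Y20) => Ex.
    have H := Hxq y1 (elimN eqP Y10) (elimN eqP Y1p). by rewrite Ex eqxx in H.
  have [w1 [E1 [_ [A1 C1]]]] := W y1; have [w2 [E2 [_ [A2 C2]]]] := W y2.
  have Bw1 := part_le2 w1; have Bw2 := part_le2 w2.
  have D1 := C1 (elimN eqP Y10); have D2 := C2 (elimN eqP Y20).
  rewrite E1 E2; apply: Hc.2; rewrite /K1st; apply/eqP.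
  case: (eqVneq (K1st_part y1) p) => [Y1p|Y1p].
    have [F1 F2] := A1 Y1p; lia.
  case: (eqVneq (K1st_part y2) p) => [Y2p|Y2p].
    have [F1 F2] := A2 Y2p; lia.
  move: Y1p Y2p Y10 Y20 => /eqP ? /eqP ? /eqP ? /eqP ?; lia.
have := Hu c' Hc' a.
by rewrite /c' /= => E; rewrite E eqxx in Hxa.
Qed.

Lemma in2 (x a b : nat) : x \in [:: a; b] -> x = a \/ x = b.
Proof. by rewrite !inE => /orP [/eqP|/eqP]; [left|right]. Qed.

Lemma U1 s t : UkLC (K1st s t) 1.
Proof.
exists (fun v => [:: K1st_part v]); split.
  by move=> v.
exists (fun v => K1st_part v); split.
  split; first by move=> v; rewrite mem_head.
  by move=> u v; rewrite /K1st => /eqP.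
move=> c' [Hm _] v; have := Hm v; by rewrite inE => /eqP.
Qed.

Lemma U2a s t : 1 <= s -> 2 <= t -> UkLC (K1st s t) 2.
Proof.
move=> Hs Ht.
pose L := fun v : K1st_V s t => match v with inl _ => [:: 1; 2]
  | inr (inl _) => [:: 1; 3]
  | inr (inr j) => if val j == 0 then [:: 1; 2] else [:: 2; 3] end.
exists L; split.
  by move=> [[]|[i|j]] //=; case: ifP.
exists (fun v : K1st_V s t => match v with inl _ => 1 | inr (inl _) => 3 | inr (inr _) => 2 end).
split.
  split.
    by move=> [[]|[i|j]] //=; case: ifP.
  by move=> [[]|[i|i]] [[]|[j|j]].
move=> c' [Hm Hp].
pose i0 := (Ordinal Hs : 'I_s).
have Ht0 : 0 < t by lia.
pose j0 := (Ordinal Ht0 : 'I_t).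
pose j1 := (Ordinal Ht : 'I_t).
have Mi0 := in2 (Hm (inr (inl i0))).
have Mj0 := in2 (Hm (inr (inr j0))).
have Mj1 := in2 (Hm (inr (inr j1))).
have Ma := in2 (Hm (inl tt)).
have P1 := Hp (inl tt) (inr (inr j0)) erefl.
have P2 := Hp (inl tt) (inr (inr j1)) erefl.
have P3 := Hp (inr (inl i0)) (inr (inr j0)) erefl.
have P4 := Hp (inr (inl i0)) (inr (inr j1)) erefl.
have P5 := Hp (inl tt) (inr (inl i0)) erefl.
have Ha : c' (inl tt) = 1 by lia.
have Hi0 : c' (inr (inl i0)) = 3 by lia.
move=> v; have Mv := Hm v; have Pv := Hp (inl tt) v; have Qv := Hp (inr (inl i0)) v.
case: v Mv Pv Qv => [[]|[i|j]].
- by move=> *; exact: Ha.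
- move=> /in2 Mv Pv _; have := Pv erefl; lia.
- move=> Mv Pv Qv; have := Pv erefl; have := Qv erefl.
  have : c' (inr (inr j)) \in (if val j == 0 then [:: 1; 2] else [:: 2; 3]) := Mv.
  rewrite Ha Hi0; case: ifP => _ /in2; set y := c' _; lia.
Qed.

Lemma U2b s t : 2 <= s -> 1 <= t -> UkLC (K1st s t) 2.
Proof.
move=> Hs Ht.
pose L := fun v : K1st_V s t => match v with inl _ => [:: 1; 2]
  | inr (inr _) => [:: 1; 3]
  | inr (inl j) => if val j == 0 then [:: 1; 2] else [:: 2; 3] end.
exists L; split.
  by move=> [[]|[j|i]] //=; case: ifP.
exists (fun v : K1st_V s t => match v with inl _ => 1 | inr (inr _) => 3 | inr (inl _) => 2 end).
split.
  split.
    by move=> [[]|[j|i]] //=; case: ifP.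
  by move=> [[]|[i|i]] [[]|[j|j]].
move=> c' [Hm Hp].
pose i0 := (Ordinal Ht : 'I_t).
have Hs0 : 0 < s by lia.
pose j0 := (Ordinal Hs0 : 'I_s).
pose j1 := (Ordinal Hs : 'I_s).
have Mi0 := in2 (Hm (inr (inr i0))).
have Mj0 := in2 (Hm (inr (inl j0))).
have Mj1 := in2 (Hm (inr (inl j1))).
have Ma := in2 (Hm (inl tt)).
have P1 := Hp (inl tt) (inr (inl j0)) erefl.
have P2 := Hp (inl tt) (inr (inl j1)) erefl.
have P3 := Hp (inr (inr i0)) (inr (inl j0)) erefl.
have P4 := Hp (inr (inr i0)) (inr (inl j1)) erefl.
have P5 := Hp (inl tt) (inr (inr i0)) erefl.
have Ha : c' (inl tt) = 1 by lia.
have Hi0 : c' (inr (inr i0)) = 3 by lia.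
move=> v; have Mv := Hm v; have Pv := Hp (inl tt) v; have Qv := Hp (inr (inr i0)) v.
case: v Mv Pv Qv => [[]|[j|i]].
- by move=> *; exact: Ha.
- move=> Mv Pv Qv; have := Pv erefl; have := Qv erefl.
  have : c' (inr (inl j)) \in (if val j == 0 then [:: 1; 2] else [:: 2; 3]) := Mv.
  rewrite Ha Hi0; case: ifP => _ /in2; set y := c' _; lia.
- move=> /in2 Mv Pv _; have := Pv erefl; lia.
Qed.

Theorem proposition3p5 (s t : nat) :
  1 <= s -> 1 <= t ->
  has_M (K1st s t) 3 /\ (2 <= maxn s t -> m_number_is (K1st s t) 3).
Proof.
move=> Hs Ht; split; first exact: M3.
move=> Hm; split => //; first exact: M3.
move=> j Hj; rewrite /has_M => H; apply: H.
have [->|->] : j = 1 \/ j = 2 by lia.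
  exact: U1.
have [H2|H2] : 2 <= t \/ 2 <= s by lia.
  exact: U2a.
exact: U2b.
Qed.
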